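(* Let $\mathcal{A}$ be a finite or countable alphabet, $\mathcal{M}$ a countable set of probability measures on $\mathcal{A}^\infty$, $w:\mathcal{M}\to(0,1]$ a prior with $\sum_\nu w_\nu=1$, $\xi$ the Bayes mixture and $\mu\in\mathcal{M}$. For every $n\in\mathbb{N}$, both $\mathbb{E}_\mu\ln(\mu_{<n}/\xi_{<n})$ and $\mathbb{E}_\mu d_n$ exist and are finite.
   Context: $\mathcal{A}^\infty$ carries the $\sigma$-algebra generated by cylinders $\Gamma_x=\{x\omega\}$; for a measure $\rho$, $\rho(x):=\rho(\Gamma_x)$, $\rho(y|x):=\rho(xy)/\rho(x)$, and $\rho_{<t}(\omega):=\rho(\omega_{<t})$ with $\omega_{<t}=\omega_1\cdots\omega_{t-1}$. Bayes mixture $\xi(A):=\sum_\nu w_\nu\nu(A)$. Natural logs. $d_n(\omega):=\sum_{a\in\mathcal{A}}\mu(a|\omega_{<n})\ln\frac{\mu(a|\omega_{<n})}{\xi(a|\omega_{<n})}$. *)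

(* Defs.v *)
From HB Require Import structures.
From mathcomp Require Import all_boot all_order all_algebra.
From mathcomp Require Import all_classical all_reals all_analysis.
Set Implicit Arguments. Unset Strict Implicit. Unset Printing Implicit Defensive.
Import Order.TTheory GRing.Theory Num.Theory.
Local Open Scope classical_set_scope.
Local Open Scope ring_scope.

(* Infinite sequences over A: omega : nat -> A, omega 0 is the first letter
   (the paper's omega_1). *)

(* the prefix omega_{<t} = omega_1 ... omega_{t-1}, a word of length t-1 *)
Definition pre (A : Type) (t : nat) (omega : nat -> A) : seq A :=
  mkseq omega t.-1.

Definition cyl (A : Type) (x : seq A) : set (nat -> A) :=
  [set omega | mkseq omega (size x) = x].

Definition cylinders (A : pointedType) : set (set (nat -> A)) := [set cyl x | x in [set: seq A]].
Definition seqspace (A : pointedType) := g_sigma_algebraType (@cylinders A).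

Section Defs.
Context {R : realType} {A : pointedType}.
Local Notation Omega := (seqspace A).

Definition cylm (rho : set Omega -> \bar R) (x : seq A) : R := fine (rho (cyl x)).

Definition condp (rho : set Omega -> \bar R) (y x : seq A) : R :=
  cylm rho (x ++ y) / cylm rho x.

Definition mixture (M : set (probability Omega R)) (w : probability Omega R -> R)
  (B : set Omega) : \bar R :=
  (\esum_(nu in M) ((w nu)%:E * (nu : set Omega -> \bar R) B))%E.

Definition logratio (mu xi : set Omega -> \bar R) (n : nat) (omega : Omega) : R :=
  ln (cylm mu (pre n omega) / cylm xi (pre n omega)).

Definition dterm (mu xi : set Omega -> \bar R) (n : nat) (omega : Omega) (a : A) : R :=
  condp mu [:: a] (pre n omega) *
  ln (condp mu [:: a] (pre n omega) / condp xi [:: a] (pre n omega)).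

(* d_n(omega) := sum_{a in A} dterm a, the (unconditional) sum over the
   countable alphabet, i.e. sum of positive parts minus sum of negative parts *)
Definition d_n (mu xi : set Omega -> \bar R) (n : nat) (omega : Omega) : \bar R :=
  (\esum_(a in [set: A]) (Num.max (dterm mu xi n omega a) 0)%:E
   - \esum_(a in [set: A]) (Num.max (- dterm mu xi n omega a) 0)%:E)%E.

End Defs.

(* Main.v *)
Require Import Defs.
From HB Require Import structures.
From mathcomp Require Import all_boot all_order all_algebra.
From mathcomp Require Import all_classical all_reals all_analysis.
From mathcomp Require Import measurable_realfun.
From mathcomp.algebra_tactics Require Import ring lra.
Set Implicit Arguments. Unset Strict Implicit. Unset Printing Implicit Defensive.
Import Order.TTheory GRing.Theory Num.Theory.
Local Open Scope classical_set_scope.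
Local Open Scope ring_scope.

Lemma cyl_meas (A : pointedType) (x : seq A) : measurable (cyl x : set (seqspace A)).
Proof. by apply: sub_sigma_algebra; exists x. Qed.

Definition iota_w (A : pointedType) (f : A -> nat) (x : seq A) : nat := pickle (map f x).

Definition Fp (A : pointedType) (f : A -> nat) (k n : nat) : set (seqspace A) :=
  [set om | iota_w f (mkseq om k) = n].

Lemma Fp_cases (A : pointedType) (f : A -> nat) (hf : injective f) k n :
  (exists x, [/\ size x = k, iota_w f x = n & Fp f k n = cyl x]) \/ Fp f k n = set0.
Proof.
have inj : injective (iota_w f).
  by move=> x y /(pcan_inj pickleK) /(inj_map hf).
case: (pselect (exists x, size x = k /\ iota_w f x = n)) => [[x [sx ix]]|nx].
  left; exists x; split => //; apply/seteqP; split => om /=.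
    by rewrite /Fp /cyl /= -ix sx => /inj.
  by rewrite /Fp /cyl /= sx => ->.
right; apply/seteqP; split => om //= h; apply: nx; exists (mkseq om k).
by rewrite size_mkseq.
Qed.

Lemma Fp_meas (A : pointedType) (f : A -> nat) (hf : injective f) k n :
  measurable (Fp f k n).
Proof. by case: (Fp_cases hf k n) => [[x [_ _ ->]]|->]; [exact: cyl_meas|]. Qed.

Lemma Fp_triv (A : pointedType) (f : A -> nat) k : trivIset setT (Fp f k).
Proof. by move=> i j _ _ [om [/= <- <-]]. Qed.

Lemma Fp_cover (A : pointedType) (f : A -> nat) k : \bigcup_n Fp f k n = setT.
Proof. by apply/seteqP; split => // om _; exists (iota_w f (mkseq om k)). Qed.

Lemma meas_pre (A : pointedType) (f : A -> nat) (hf : injective f) k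
   d (T : measurableType d) (G : seq A -> T) :
  measurable_fun setT (fun om : seqspace A => G (mkseq om k)).
Proof.
rewrite -(Fp_cover f k); apply/measurable_fun_bigcup => [n|n].
  exact: Fp_meas.
case: (Fp_cases hf k n) => [[x [sx _ ->]]|->]; last exact: measurable_fun_set0.
apply: (@eq_measurable_fun _ _ _ _ _ (cst (G x))); last exact: measurable_cst.
by move=> om; rewrite inE /cyl /= sx => ->.
Qed.

Lemma fsum_meas_le (R : realType) d (T : measurableType d) (nu : {measure set T -> \bar R})
  (I : choiceType) (D : set I) (F : I -> set T) (G : set T) (X : set I) :
  finite_set X -> X `<=` D ->
  (forall i, D i -> measurable (F i)) -> trivIset D F -> (forall i, D i -> F i `<=` G) ->
  measurable G ->
  (\sum_(i \in X) nu (F i) <= nu G)%E.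
Proof.
move=> fX XD mF tF FG mG.
have mX i : X i -> measurable (F i) by move=> /XD /mF.
rewrite -measure_fsbig//; last exact: sub_trivIset tF.
apply: le_measure; rewrite ?inE//.
  rewrite fsbig_finite// big_seq; apply: bigsetU_measurable => i.
  by rewrite in_fset_set// inE => /mX.
rewrite fsbig_finite// => t; rewrite -bigcup_seq => -[i /=].
by rewrite in_fset_set// inE => /XD Di /(FG _ Di).
Qed.

Lemma esum_meas_le (R : realType) d (T : measurableType d) (nu : {measure set T -> \bar R})
  (I : choiceType) (D : set I) (F : I -> set T) (G : set T) :
  (forall i, D i -> measurable (F i)) -> trivIset D F -> (forall i, D i -> F i `<=` G) ->
  measurable G ->
  (\esum_(i in D) nu (F i) <= nu G)%E.
Proof.
move=> mF tF FG mG; apply: ge_ereal_sup => _ [X [fX XD]] <-.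
exact: (fsum_meas_le nu fX XD mF tF FG mG).
Qed.

Lemma esum_mix_le (R : realType) (A : pointedType)
  (M : set (probability (seqspace A) R)) (w : probability (seqspace A) R -> R)
  (hw : forall nu, M nu -> 0 <= w nu)
  (I : choiceType) (D : set I) (F : I -> set (seqspace A)) (G : set (seqspace A)) :
  (forall i, D i -> measurable (F i)) -> trivIset D F -> (forall i, D i -> F i `<=` G) ->
  measurable G ->
  (\esum_(i in D) mixture M w (F i) <= mixture M w G)%E.
Proof.
move=> mF tF FG mG; apply: ge_ereal_sup => _ [X [fX XD]] <-.
rewrite /mixture fsbig_finite//= -esum_sum; last first.
  by move=> nu i Mnu _; apply: mule_ge0; rewrite ?lee_fin ?hw.
apply: le_esum => nu Mnu.
rewrite -ge0_sume_distrr; last by move=> *.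
apply: lee_wpmul2l; first by rewrite lee_fin hw.
rewrite -fsbig_finite//; exact: (fsum_meas_le nu fX XD mF tF FG mG).
Qed.

Lemma esumZl (R : realType) (I : choiceType) (D : set I) (a : I -> \bar R) (c : R) :
  0 <= c -> (forall i, 0 <= a i)%E ->
  (\esum_(i in D) (c%:E * a i) = c%:E * \esum_(i in D) a i)%E.
Proof.
move=> c0 a0; have [->|cn0] := eqVneq c 0.
  by rewrite mul0e esum1// => i _; rewrite mul0e.
have cp : 0 < c by rewrite lt_neqAle eq_sym cn0.
apply/eqP; rewrite eq_le; apply/andP; split.
  apply: ge_ereal_sup => _ [X [fX XD]] <-.
  rewrite -ge0_mule_fsumr//; apply: lee_wpmul2l; first by rewrite lee_fin.
  by apply: ereal_sup_ubound; exists X.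
have -> : (\esum_(i in D) (c%:E * a i) = c%:E * ((c^-1)%:E * \esum_(i in D) (c%:E * a i)))%E.
  by rewrite muleA -EFinM mulfV// mul1e.
apply: lee_wpmul2l; first by rewrite lee_fin.
apply: ge_ereal_sup => _ [X [fX XD]] <-.
have -> : (\sum_(i \in X) a i = (c^-1)%:E * \sum_(i \in X) (c%:E * a i))%E.
  by rewrite -ge0_mule_fsumr// muleA -EFinM mulVf// mul1e.
apply: lee_wpmul2l; first by rewrite lee_fin invr_ge0.
by apply: ereal_sup_ubound; exists X.
Qed.

Lemma mix_ge0 (R : realType) (A : pointedType)
  (M : set (probability (seqspace A) R)) (w : probability (seqspace A) R -> R)
  (hw : forall nu, M nu -> 0 <= w nu) B : (0 <= mixture M w B)%E.
Proof. by apply: esum_ge0 => nu Mnu; apply: mule_ge0; rewrite ?lee_fin ?hw. Qed.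

Lemma mix_le1 (R : realType) (A : pointedType)
  (M : set (probability (seqspace A) R)) (w : probability (seqspace A) R -> R)
  (hw : forall nu, M nu -> 0 <= w nu)
  (hw1 : (\esum_(nu in M) (w nu)%:E = 1)%E) B : measurable B ->
  (mixture M w B <= 1)%E.
Proof.
move=> mB; rewrite -hw1; apply: le_esum => nu Mnu.
rewrite -[leRHS]mule1; apply: lee_wpmul2l; first by rewrite lee_fin hw.
exact: probability_le1.
Qed.

Lemma mix_ge (R : realType) (A : pointedType)
  (M : set (probability (seqspace A) R)) (w : probability (seqspace A) R -> R)
  (hw : forall nu, M nu -> 0 <= w nu) mu (hmu : M mu) B :
  ((w mu)%:E * mu B <= mixture M w B)%E.
Proof.
apply: esum_ge; exists [set mu]; last by rewrite fsbig_set1.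
by split; [exact: finite_set1|move=> ? ->].
Qed.

Lemma int_bound (R : realType) (A : pointedType) (f : A -> nat) (hf : injective f)
  (M : set (probability (seqspace A) R)) (w : probability (seqspace A) R -> R)
  (hw : forall nu, M nu -> 0 <= w nu)
  (hw1 : (\esum_(nu in M) (w nu)%:E = 1)%E)
  (mu : probability (seqspace A) R) k (g : seq A -> \bar R) (al be : R) :
  0 <= al -> 0 <= be -> (forall x, 0 <= g x)%E ->
  (forall x, size x = k ->
     g x * mu (cyl x) <= al%:E * mu (cyl x) + be%:E * mixture M w (cyl x))%E ->
  (\int[mu]_(om in setT) g (mkseq om k) < +oo)%E.
Proof.
move=> al0 be0 g0 hg.
rewrite -(Fp_cover f k) ge0_integral_bigcup //; last first.
all: try (by move=> n; exact: Fp_meas).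
all: try exact: Fp_triv.
  by rewrite Fp_cover; exact: (meas_pre hf k g).
apply: (@le_lt_trans _ _ (\sum_(n <oo) (al%:E * mu (Fp f k n) +
    be%:E * mixture M w (Fp f k n)))%E).
  apply: lee_nneseries => [n _ _|n _]; first exact: integral_ge0.
  case: (Fp_cases hf k n) => [[x [sx _ ->]]|->]; last first.
    by rewrite integral_set0 adde_ge0// mule_ge0// ?lee_fin// mix_ge0.
  rewrite (eq_integral (cst (g x))); last first.
    by move=> om; rewrite inE /cyl /= sx => ->.
  by rewrite integral_cst ?hg//; exact: cyl_meas.
rewrite nneseriesD; last 2 first.
- by move=> *; rewrite mule_ge0// lee_fin.
- by move=> *; rewrite mule_ge0// ?lee_fin// mix_ge0.
rewrite !nneseriesZl//; last by move=> *; exact: mix_ge0.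
rewrite -measure_semi_bigcup; last 3 first.
- by move=> n; exact: Fp_meas.
- exact: Fp_triv.
- by rewrite Fp_cover.
apply: (@le_lt_trans _ _ (al%:E * 1 + be%:E * 1)%E); last first.
  by rewrite !mule1 -EFinD ltry.
apply: leeD; apply: lee_wpmul2l; rewrite ?lee_fin//.
  by apply: probability_le1; rewrite Fp_cover.
rewrite nneseries_esumT; last by move=> *; exact: mix_ge0.
apply: (@le_trans _ _ (mixture M w setT)); last exact: mix_le1.
apply: esum_mix_le => //.
- by move=> n _; exact: Fp_meas.
- exact: Fp_triv.
Qed.

Lemma R1 (R : realType) (m s c : R) : 0 <= m -> 0 < c -> c <= 1 -> c * m <= s ->
  `|ln (m / s)| * m <= - ln c * m + s.
Proof.
move=> m0 c0 c1 cms.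
have lnc : ln c <= 0 by exact: ln_le0.
have [me|mp] := eqVneq m 0; first by move: cms; rewrite me !mulr0 add0r.
have mpos : 0 < m by rewrite lt_neqAle eq_sym mp.
have spos : 0 < s by apply: lt_le_trans cms; exact: mulr_gt0.
have [ms|sm] := leP m s.
  have h1 : m / s <= 1 by rewrite ler_pdivrMr// mul1r.
  rewrite ler0_norm; last exact: ln_le0.
  have -> : - ln (m / s) = ln (s / m).
    by rewrite -lnV ?invf_div// posrE; exact: divr_gt0.
  have := ln_sublinear (divr_gt0 spos mpos) => h.
  have : ln (s / m) * m <= s / m * m by rewrite ler_pM2r// ltW.
  rewrite divfK ?gt_eqF// => h2; nra.
have h1 : 1 <= m / s by rewrite ler_pdivlMr// mul1r ltW.
rewrite ger0_norm; last exact: ln_ge0.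
have : ln (m / s) <= - ln c.
  have h2 : 0 < m / s by exact: divr_gt0.
  rewrite -lnV ?posrE// ler_ln ?posrE ?invr_gt0//.
  by rewrite ler_pdivrMr// mulrC ler_pdivlMr// mulrC.
move=> h; nra.
Qed.

Lemma R2 (R : realType) (p q : R) : 0 <= p -> 0 <= q -> (0 < p -> 0 < q) ->
  Num.max (- (p * ln (p / q))) 0 <= q.
Proof.
move=> p0 q0 pq; have [->|pn] := eqVneq p 0.
  by rewrite mul0r oppr0 maxxx.
have pp : 0 < p by rewrite lt_neqAle eq_sym pn.
have qp := pq pp.
have h2 : 0 < p / q by exact: divr_gt0.
rewrite ge_max q0 andbT -mulrN -lnV ?posrE// invf_div.
have := ln_sublinear (divr_gt0 qp pp) => h.
have : p * ln (q / p) <= p * (q / p) by rewrite ler_pM2l// ltW.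
by rewrite [p * (q / p)]mulrC divfK ?gt_eqF.
Qed.

Lemma R3 (R : realType) (p q K : R) : 0 <= p -> 0 < K -> (0 < p -> 0 < q /\ p / q <= K) ->
  Num.max (p * ln (p / q)) 0 <= p * K.
Proof.
move=> p0 K0 pq; have [->|pn] := eqVneq p 0.
  by rewrite !mul0r maxxx.
have pp : 0 < p by rewrite lt_neqAle eq_sym pn.
have [qp pqK] := pq pp.
rewrite ge_max (mulr_ge0 p0 (ltW K0)) andbT ler_pM2l//.
have h2 : 0 < p / q by exact: divr_gt0.
apply: (le_trans (y := ln K)); first by rewrite ler_ln ?posrE.
exact/ltW/ln_sublinear.
Qed.

Lemma R4 (R : realType) (u v m s c : R) : 0 < u -> 0 < m -> 0 < s -> 0 < c ->
  c * u <= v -> (u / m) / (v / s) <= s / (c * m).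
Proof.
move=> u0 m0 s0 c0 cuv.
have v0 : 0 < v by apply: lt_le_trans cuv; exact: mulr_gt0.
have -> : (u / m) / (v / s) = (u / v) * (s / m).
  by field; rewrite ?gt_eqF.
have -> : s / (c * m) = c^-1 * (s / m).
  by field; rewrite ?gt_eqF.
by rewrite ler_pM2r ?divr_gt0// ler_pdivrMr// mulrC ler_pdivlMr// mulrC.
Qed.

Lemma cyl_snoc_sub (A : pointedType) (x : seq A) a :
  (cyl (x ++ [:: a]) : set (seqspace A)) `<=` cyl x.
Proof.
move=> om; rewrite /cyl /= => h; move: h.
by rewrite size_cat /= addn1 mkseqS cats1 => /rcons_inj [].
Qed.

Lemma cyl_snoc_triv (A : pointedType) (x : seq A) :
  trivIset setT (fun a => (cyl (x ++ [:: a]) : set (seqspace A))).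
Proof.
move=> a b _ _ [om [h1 h2]]; rewrite /cyl /= !size_cat /= in h1 h2.
move: h2; rewrite h1 => /eqP.
by rewrite !cats1 eqseq_rcons eqxx /= => /eqP.
Qed.

Unset Implicit Arguments.
Theorem lemma4 (R : realType) (A : pointedType)
  (hA : countable [set: A])
  (M : set (probability (seqspace A) R)) (hM : countable M)
  (w : probability (seqspace A) R -> R)
  (hw : forall nu, M nu -> 0 < w nu <= 1)
  (hw1 : (\esum_(nu in M) (w nu)%:E = 1)%E)
  (mu : probability (seqspace A) R) (hmu : M mu) :
  let xi := mixture M w in
  forall n : nat,
    mu.-integrable setT (fun omega => (logratio mu xi n omega)%:E) /\
    mu.-integrable setT (d_n mu xi n).
Proof.
move=> xi n; rewrite {}/xi.
have /countable_injP [f fi] := hA.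
have hf : injective f by move=> a b; apply: fi; rewrite inE.
have hw0 nu : M nu -> 0 <= w nu by move=> /hw /andP [/ltW].
set c := w mu.
have /andP [c0 c1] := hw mu hmu.
have mE x : mu (cyl x) = (cylm mu x)%:E.
  by rewrite fineK//; exact: (fin_num_measure mu _ (cyl_meas x)).
have xE x : (mixture M w) (cyl x) = (cylm (mixture M w) x)%:E.
  rewrite fineK// ge0_fin_numE; last exact: mix_ge0.
  by apply: (le_lt_trans (mix_le1 hw0 hw1 (cyl_meas x))); exact: ltey.
have m0 x : 0 <= cylm mu x by rewrite -lee_fin -mE.
have s0 x : 0 <= cylm (mixture M w) x by rewrite -lee_fin -xE; exact: mix_ge0.
have cms x : c * cylm mu x <= cylm (mixture M w) x.
  by rewrite -lee_fin EFinM -mE -xE; exact: mix_ge.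
split.
  apply/integrableP; split.
    exact: (meas_pre hf n.-1 (fun x => (ln (cylm mu x / cylm (mixture M w) x))%:E)).
  apply: (@int_bound R A f hf M w hw0 hw1 mu n.-1
    (fun x => `|(ln (cylm mu x / cylm (mixture M w) x))%:E|)%E (- ln c) 1) => //.
  - by rewrite oppr_ge0; exact: ln_le0.
  - move=> x _; rewrite mE xE abse_EFin -!EFinM -EFinD lee_fin mul1r.
    exact: R1.
pose D x a := condp mu [:: a] x * ln (condp mu [:: a] x / condp (mixture M w) [:: a] x).
pose P x := (\esum_(a in [set: A]) (Num.max (D x a) 0)%:E)%E.
pose N x := (\esum_(a in [set: A]) (Num.max (- D x a) 0)%:E)%E.
apply/integrableP; split.
  exact: (meas_pre hf n.-1 (fun x => P x - N x)%E).
apply: (@int_bound R A f hf M w hw0 hw1 mu n.-1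
    (fun x => `|P x - N x|)%E 1 c^-1) => //.
- by rewrite invr_ge0 ltW.
- move=> x _.
  have P0 : (0 <= P x)%E by apply: esum_ge0 => a _; rewrite lee_fin le_max lexx orbT.
  have N0 : (0 <= N x)%E by apply: esum_ge0 => a _; rewrite lee_fin le_max lexx orbT.
  rewrite mE xE.
  have [me|mp] := eqVneq (cylm mu x) 0.
    by rewrite me !mule0 add0e -EFinM lee_fin mulr_ge0// invr_ge0 ltW.
  have mpos : 0 < cylm mu x by rewrite lt_neqAle eq_sym mp m0.
  have spos : 0 < cylm (mixture M w) x.
    by apply: lt_le_trans (cms x); exact: mulr_gt0.
  set m := cylm mu x in mpos mp *; set s := cylm (mixture M w) x in spos *.
  apply: (@le_trans _ _ ((P x + N x) * m%:E)%E).
    apply: lee_wpmul2r; first by rewrite lee_fin; exact: m0.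
    by apply: le_trans (lee_abs_sub _ _) _; rewrite !gee0_abs.
  rewrite ge0_muleDl// addeC.
  have pq a : 0 < condp mu [:: a] x -> 0 < cylm mu (x ++ [:: a]) /\ 0 < cylm (mixture M w) (x ++ [:: a]).
    move=> hp; have u0 : 0 < cylm mu (x ++ [:: a]).
      rewrite lt_neqAle m0 andbT; apply/negP => /eqP u0.
      by move: hp; rewrite /condp -u0 mul0r ltxx.
    by split=> //; apply: lt_le_trans (cms _); exact: mulr_gt0.
  apply: leeD.
  +
    have : (N x <= 1)%E.
      apply: (@le_trans _ _ (\esum_(a in [set: A]) ((s^-1)%:E * (mixture M w) (cyl (x ++ [:: a]))))%E).
        apply: le_esum => a _; rewrite xE -EFinM lee_fin.
        rewrite (_ : s^-1 * _ = condp (mixture M w) [:: a] x); last by rewrite /condp mulrC.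
        apply: R2.
        * by rewrite /condp divr_ge0.
        * by rewrite /condp divr_ge0.
        * by move=> /pq [_ v0]; rewrite /condp divr_gt0.
      rewrite esumZl; last 2 first.
        by rewrite invr_ge0 ltW.
        by move=> a; exact: mix_ge0.
      apply: (@le_trans _ _ ((s^-1)%:E * (mixture M w) (cyl x))%E).
        apply: lee_wpmul2l; first by rewrite lee_fin invr_ge0 ltW.
        apply: esum_mix_le => //.
        * by move=> a _; exact: cyl_meas.
        * exact: cyl_snoc_triv.
        * by move=> a _; exact: cyl_snoc_sub.
        * exact: cyl_meas.
      by rewrite xE -EFinM mulVf ?gt_eqF.
    move=> N1; apply: lee_wpmul2r; [rewrite lee_fin; exact: m0|exact: N1].
  +
    set K := s / (c * m).
    have K0 : 0 < K by rewrite divr_gt0// mulr_gt0.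
    have : (P x <= K%:E)%E.
      apply: (@le_trans _ _ (\esum_(a in [set: A]) ((K / m)%:E * mu (cyl (x ++ [:: a]))))%E).
        apply: le_esum => a _; rewrite mE -EFinM lee_fin.
        rewrite (_ : K / m * _ = condp mu [:: a] x * K); last first.
          rewrite /condp mulrC -mulrA; congr (_ * _); rewrite mulrC. by [].
        apply: R3 => //.
        * by rewrite /condp divr_ge0.
        * move=> hp; have [u0 v0] := pq a hp; split; first by rewrite /condp divr_gt0.
          by rewrite /condp /K; apply: R4.
      rewrite esumZl; last 2 first.
        by rewrite divr_ge0// ltW.
        by move=> a; exact: measure_ge0.
      apply: (@le_trans _ _ ((K / m)%:E * mu (cyl x))%E).
        apply: lee_wpmul2l; first by rewrite lee_fin divr_ge0// ltW.
        apply: esum_meas_le => //.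
        * by move=> a _; exact: cyl_meas.
        * exact: cyl_snoc_triv.
        * by move=> a _; exact: cyl_snoc_sub.
        * exact: cyl_meas.
      by rewrite mE -EFinM divfK ?gt_eqF.
    move=> PK; apply: (@le_trans _ _ (K%:E * m%:E)%E).
      by apply: lee_wpmul2r => //; rewrite lee_fin; exact: m0.
    rewrite -!EFinM lee_fin /K.
    have -> : s / (c * m) * m = c^-1 * s.
      by field; rewrite ?gt_eqF.
    by [].
Qed.
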